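(* In the standing setup, $$\sum_{i\in\mathcal{N}}\mathrm{len}(\rho^i_{\mathrm{up}})\le 4n^2\qquad\text{and}\qquad\sum_{i\in\mathcal{N}}\mathrm{len}(\rho^i_{\mathrm{down}})\le 4n^2.$$
   Context: $\mathbb{N}=\{0,1,2,\dots\}$. A one-counter system (OCS) $\mathcal{O}$ consists of a finite set $Q$ of states, a set $T_{>0}\subseteq Q\times\{-1,0,1\}\times Q$ of non-zero transitions and a set $T_{=0}\subseteq Q\times\{0,1\}\times Q$ of zero tests. A configuration is a pair $(q,c)\in Q\times\mathbb{N}$ (state $q$, counter value $c$). A transition $t=(p,d,q)$ has source $p$, target $q$, effect $d$; it can be fired in $(p,c)$ if either $t\in T_{>0}$ and $c>0$, or $t\in T_{=0}$ and $c=0$, yielding $(q,c+d)$. A path is a sequence $(\gamma_1,t_1)\cdots(\gamma_m,t_m)$ such that, with some $\gamma_{m+1}$, firing $t_i$ in $\gamma_i$ yields $\gamma_{i+1}$ for all $i\le m$; its source is $\gamma_1$, target $\gamma_{m+1}$, length $\mathrm{len}=m$, configurations appearing on it are $\gamma_1,\dots,\gamma_{m+1}$, intermediate ones are $\gamma_2,\dots,\gamma_m$; its projection is $\mathrm{proj}=t_1\cdots t_m$ and its effect $\mathrm{eff}$ is the sum of the effects of its transitions. A sequence of transitions is consistent if each transition's target is the next one's source. A cycle is a consistent sequence of non-zero transitions starting and ending in the same state (its base state); positive/negative if its effect is positive/negative; simple if no state is visited twice except the base at start and end. The transition multigraph $G$ has vertices $Q$ and an edge $p\to q$ labelled $d$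 for each $(p,d,q)\in T_{>0}$; $\mathfrak{S}$ is the set of its SCCs and $n_S$ the number of states in $S\in\mathfrak{S}$. A cycle is contained in $S$ if all its states lie in $S$; $S$ is positively (negatively) enabled if it contains a positive (negative) cycle. For every positively enabled $S$ a simple positive cycle $\sigma^+_S$ contained in $S$ is fixed, and for every negatively enabled $T$ a simple negative cycle $\sigma^-_T$ contained in $T$. An arc is a path whose source and target have counter value $0$ and whose intermediate configurations have positive counter value. A path is low if all configurations appearing on it have counter value $<5n$, where $n=|Q|$. For $S,T\in\mathfrak{S}$, an arc $\rho$ is $(S,T)$-normal if $\rho=\rho_{\mathrm{pref}}\rho_{\mathrm{up}}\rho_{\mathrm{cap}}\rho_{\mathrm{down}}\rho_{\mathrm{suff}}$ (normal decomposition) with $\rho_{\mathrm{pref}},\rho_{\mathrm{suff}}$ low, $\mathrm{proj}(\rho_{\mathrm{up}})=(\sigma^+_S)^a$, $\mathrm{proj}(\rho_{\mathrm{down}})=(\sigma^-_T)^b$ for some $a,b\in\mathbb{N}$, the source of $\rho_{\mathrm{cap}}$ having the base state of $\sigma^+_S$ and its target the base state of $\sigma^-_T$. Writing $A=\mathrm{eff}(\sigma^+_S)$, $B=-\mathrm{eff}(\sigma^-_T)$, such a decomposition is good if: (iii) $aA\le 2\,\mathrm{len}(\rho_{\mathrm{cap}})+2\,\mathrm{lcm}(A,B)$; (iv) $bB\le 2\,\mathrm{len}(\rho_{\mathrm{cap}})+2\,\mathrm{lcm}(A,B)$; (v) no infix of $\mathrm{proj}(\rho_{\mathrm{cap}})$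 is a cycle with effect divisible by $\gcd(A,B)$; (vi) the target of $\rho_{\mathrm{up}}$ and the source of $\rho_{\mathrm{down}}$ have counter values $>n$; (vii) all configurations appearing on $\rho_{\mathrm{pref}}$ and $\rho_{\mathrm{suff}}$ together are pairwise distinct. Standing setup: $\alpha,\beta$ are configurations with counter value $0$; $\rho=\rho^1\rho^2\cdots\rho^k$ is a path from $\alpha$ to $\beta$ that has the minimum possible number of appearing configurations with counter value $0$ among all paths from $\alpha$ to $\beta$; each $\rho^i$ is an arc; $\{1,\dots,k\}=\mathcal{L}\sqcup\mathcal{N}$ where for $i\in\mathcal{L}$, $\rho^i$ is a low arc of minimum length among all low arcs with the same source and target, and for $i\in\mathcal{N}$, $\rho^i$ is $(S_i,T_i)$-normal for some $S_i,T_i\in\mathfrak{S}$ with a fixed good normal decomposition $\rho^i=\rho^i_{\mathrm{pref}}\rho^i_{\mathrm{up}}\rho^i_{\mathrm{cap}}\rho^i_{\mathrm{down}}\rho^i_{\mathrm{suff}}$. For $S,T\in\mathfrak{S}$: $\mathcal{N}_{(S,T)}=\{i\in\mathcal{N}: (S_i,T_i)=(S,T)\}$, $\mathcal{N}_{(S,\cdot)}=\{i\in\mathcal{N}:S_i=S\}$, $\mathcal{N}_{(\cdot,T)}=\{i\in\mathcal{N}:T_i=T\}$. *)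

(* Defs.v *)
From HB Require Import structures.
From mathcomp Require Import all_boot all_order all_algebra.
Set Implicit Arguments. Unset Strict Implicit. Unset Printing Implicit Defensive.
Import Order.TTheory GRing.Theory Num.Theory.

Definition trans (Q : finType) := (Q * int * Q)%type.
Definition conf (Q : finType) := (Q * nat)%type.

Definition tsrc (Q : finType) (t : trans Q) : Q := t.1.1.
Definition teff (Q : finType) (t : trans Q) : int := t.1.2.
Definition ttgt (Q : finType) (t : trans Q) : Q := t.2.

Record OCS (Q : finType) := MkOCS {
  Tpos : pred (trans Q);
  Tzero : pred (trans Q);
  Tpos_eff : forall t, Tpos t -> teff t \in [:: (-1)%R; 0%R; 1%R];
  Tzero_eff : forall t, Tzero t -> teff t \in [:: 0%R; 1%R] }.

Section Defs.
Variable Q : finType.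
Variable O : OCS Q.

Definition nQ := #|Q|.

Definition fireable (g : conf Q) (t : trans Q) : bool :=
  (tsrc t == g.1) &&
  ((Tpos O t && (0 < g.2)%N) || (Tzero O t && (g.2 == 0%N))).

(* result of firing t in g (meaningful when fireable g t) *)
Definition step (g : conf Q) (t : trans Q) : conf Q :=
  (ttgt t, absz (g.2%:Z + teff t)%R).

(* A path is given by its source configuration g and its projection ts;
   its configurations are then determined. *)
Fixpoint is_path (g : conf Q) (ts : seq (trans Q)) : bool :=
  if ts is t :: ts' then fireable g t && is_path (step g t) ts' else true.

Definition confs (g : conf Q) (ts : seq (trans Q)) : seq (conf Q) :=
  g :: scanl step g ts.
Definition ptarget (g : conf Q) (ts : seq (trans Q)) : conf Q := foldl step g ts.
(* intermediate configurations gamma_2, ..., gamma_m *)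
Definition inter (g : conf Q) (ts : seq (trans Q)) : seq (conf Q) :=
  behead (belast g (scanl step g ts)).
Definition peff (ts : seq (trans Q)) : int := (\sum_(t <- ts) teff t)%R.

Definition is_arc (g : conf Q) (ts : seq (trans Q)) : bool :=
  [&& is_path g ts, g.2 == 0%N, (ptarget g ts).2 == 0%N &
      all (fun c : conf Q => 0 < c.2)%N (inter g ts)].

Definition is_low (g : conf Q) (ts : seq (trans Q)) : bool :=
  all (fun c : conf Q => c.2 < 5 * nQ)%N (confs g ts).

Definition consistent (ts : seq (trans Q)) : bool :=
  sorted (fun t t' : trans Q => ttgt t == tsrc t') ts.

Definition is_cycle (ts : seq (trans Q)) : bool :=
  [&& all (Tpos O) ts, consistent ts &
      if ts is t :: _ then tsrc t == ttgt (last t ts) else false].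

Definition base_state (ts : seq (trans Q)) : option Q := omap (@tsrc Q) (ohead ts).

Definition is_simple_cycle (ts : seq (trans Q)) : bool :=
  is_cycle ts && uniq (map (@tsrc Q) ts).

Definition edge : rel Q :=
  fun p q => has (fun d : int => Tpos O (p, d, q)) [:: (-1)%R; 0%R; 1%R].

Definition is_SCC (S : {set Q}) : Prop :=
  exists p, S = [set q | connect edge p q && connect edge q p].

Definition contained_in (S : {set Q}) (ts : seq (trans Q)) : bool :=
  all (fun t => (tsrc t \in S) && (ttgt t \in S)) ts.

Definition pos_enabled (S : {set Q}) : Prop :=
  exists ts, [&& is_cycle ts, contained_in S ts & (0 < peff ts)%R].
Definition neg_enabled (S : {set Q}) : Prop :=
  exists ts, [&& is_cycle ts, contained_in S ts & (peff ts < 0)%R].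

Record ndec := NDec {
  npref : seq (trans Q); nup : seq (trans Q); ncap : seq (trans Q);
  ndown : seq (trans Q); nsuff : seq (trans Q); na : nat; nb : nat }.

Variables (sigp sigm : {set Q} -> seq (trans Q)).

Definition fixed_cycles : Prop :=
  (forall S, is_SCC S -> pos_enabled S ->
     [&& is_simple_cycle (sigp S), contained_in S (sigp S) & (0 < peff (sigp S))%R]) /\
  (forall T, is_SCC T -> neg_enabled T ->
     [&& is_simple_cycle (sigm T), contained_in T (sigm T) & (peff (sigm T) < 0)%R]).

Definition normal_dec (S T : {set Q}) (g : conf Q) (ts : seq (trans Q)) (D : ndec) : Prop :=
  let g1 := ptarget g (npref D) in
  let g2 := ptarget g1 (nup D) in
  let g3 := ptarget g2 (ncap D) in
  let g4 := ptarget g3 (ndown D) in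
  (is_SCC S /\ is_SCC T) /\ (pos_enabled S /\ neg_enabled T) /\
  ts = npref D ++ nup D ++ ncap D ++ ndown D ++ nsuff D /\
  (is_low g (npref D) /\ is_low g4 (nsuff D)) /\
  (nup D = flatten (nseq (na D) (sigp S)) /\ ndown D = flatten (nseq (nb D) (sigm T))) /\
  (Some g2.1 = base_state (sigp S) /\ Some g3.1 = base_state (sigm T)).

(* conditions (iii)-(vii) of a good normal decomposition *)
Definition good_dec (S T : {set Q}) (g : conf Q) (D : ndec) : Prop :=
  let A := absz (peff (sigp S)) in
  let B := absz (peff (sigm T)) in
  let g1 := ptarget g (npref D) in
  let g2 := ptarget g1 (nup D) in
  let g3 := ptarget g2 (ncap D) in
  let g4 := ptarget g3 (ndown D) in
  [/\ (na D * A <= 2 * size (ncap D) + 2 * lcmn A B)%N,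
      (nb D * B <= 2 * size (ncap D) + 2 * lcmn A B)%N,
      (forall s, infix s (ncap D) -> is_cycle s -> ~~ ((gcdn A B)%:Z %| peff s)%Z),
      ((nQ < g2.2)%N /\ (nQ < g3.2)%N) &
      uniq (confs g (npref D) ++ confs g4 (nsuff D))].

End Defs.

(* Main.v *)
Require Import Defs.
From HB Require Import structures.
From mathcomp Require Import all_boot all_order all_algebra zify ring.
Import Order.TTheory GRing.Theory Num.Theory.
Set Implicit Arguments. Unset Strict Implicit. Unset Printing Implicit Defensive.

Section Basic.
Variables (Q : finType) (O : OCS Q).
Implicit Types (g : conf Q) (ts s : seq (trans Q)) (t : trans Q) (l : seq (conf Q)).

Definition allpos (l : seq (conf Q)) := all (fun c : conf Q => 0 < c.2)%N l.
Definition cnt0 (l : seq (conf Q)) := count (fun c : conf Q => c.2 == 0)%N l.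
Definition shc (d : nat) (g : conf Q) : conf Q := (g.1, g.2 + d)%N.

Lemma ptarget_cat g s1 s2 : ptarget g (s1 ++ s2) = ptarget (ptarget g s1) s2.
Proof. by rewrite /ptarget foldl_cat. Qed.

Lemma is_path_cat g s1 s2 :
  is_path O g (s1 ++ s2) = is_path O g s1 && is_path O (ptarget g s1) s2.
Proof. by elim: s1 g => [|t s1 IH] g //=; rewrite IH andbA. Qed.

Lemma ptarget_state g ts : (ptarget g ts).1 = last g.1 (map (@ttgt Q) ts).
Proof. by elim: ts g => [|t ts IH] g //=; rewrite IH. Qed.

Lemma eff_pos t : Tpos O t -> (teff t = -1 \/ teff t = 0 \/ teff t = 1)%R.
Proof.
move=> /(Tpos_eff) ; rewrite !inE => /orP[/eqP->|/orP[/eqP->|/eqP->]]; tauto.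
Qed.

Lemma eff_zero t : Tzero O t -> (teff t = 0 \/ teff t = 1)%R.
Proof.
move=> /(Tzero_eff) ; rewrite !inE => /orP[/eqP->|/eqP->]; tauto.
Qed.

Lemma fire_nonneg g t : fireable O g t -> (0 <= (g.2)%:Z + teff t)%R.
Proof.
rewrite /fireable => /andP[_ /orP[/andP[H1 H2]|/andP[H1 /eqP H2]]].
- case: (eff_pos H1) => [->|[->|->]]; lia.
- rewrite H2; case: (eff_zero H1) => ->; lia.
Qed.

Lemma step_cnt g t : fireable O g t -> ((step g t).2 : int) = ((g.2)%:Z + teff t)%R.
Proof. move=> /fire_nonneg H; rewrite /step /=; lia. Qed.

Lemma peff_cons t ts : peff (t :: ts) = (teff t + peff ts)%R.
Proof. by rewrite /peff big_cons. Qed.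

Lemma peff_cat s1 s2 : peff (s1 ++ s2) = (peff s1 + peff s2)%R.
Proof. by rewrite /peff big_cat. Qed.

Lemma ptarget_cnt g ts : is_path O g ts ->
  ((ptarget g ts).2 : int) = ((g.2)%:Z + peff ts)%R.
Proof.
elim: ts g => [|t ts IH] g /=; first by rewrite /peff big_nil; lia.
move=> /andP[Hf Hp]; rewrite IH // step_cnt // peff_cons; lia.
Qed.

Lemma path_head g t ts : is_path O g (t :: ts) -> tsrc t = g.1.
Proof. by move=> /andP[/andP[/eqP-> _] _]. Qed.

Lemma path_consistent_aux g t ts : is_path O g (t :: ts) ->
  path (fun t t' : trans Q => ttgt t == tsrc t') t ts.
Proof.
elim: ts g t => [|t' ts IH] g t //= /andP[_ Hp].
move: (Hp) => /= /andP[/andP[/eqP H _] _]. rewrite H /= eqxx /=.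
exact: IH Hp.
Qed.

Lemma path_consistent g ts : is_path O g ts -> consistent ts.
Proof. by case: ts => [|t ts] //= /path_consistent_aux. Qed.

Lemma step_shift d g t : fireable O g t -> step (shc d g) t = shc d (step g t).
Proof.
move=> /fire_nonneg H; rewrite /step /shc /=; congr pair; lia.
Qed.

Lemma fire_shift d g t : Tpos O t -> fireable O g t -> fireable O (shc d g) t.
Proof.
move=> Ht; rewrite /fireable /shc /= => /andP[-> H] /=.
case: d => [|d]; first by rewrite addn0.
by rewrite Ht addnS.
Qed.

Lemma shift_path d g ts : all (Tpos O) ts -> is_path O g ts ->
  [/\ is_path O (shc d g) ts,
      scanl (@step Q) (shc d g) ts = map (shc d) (scanl (@step Q) g ts) &
      ptarget (shc d g) ts = shc d (ptarget g ts)].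
Proof.
elim: ts g => [|t ts IH] g //= /andP[Ht Hall] /andP[Hf Hp].
rewrite fire_shift // step_shift //.
by case: (IH _ Hall Hp) => -> -> ->.
Qed.

Lemma allpos_shift d l : (0 < d)%N -> allpos (map (shc d) l).
Proof. by move=> Hd; rewrite /allpos all_map; apply/allP => x _ /=; lia. Qed.

End Basic.
Section Pos.
Variables (Q : finType) (O : OCS Q).
Implicit Types (g : conf Q) (ts s : seq (trans Q)) (t : trans Q) (l : seq (conf Q)).

Lemma behead_belast (T : Type) (x : T) (l : seq T) :
  behead (belast x l) = take (size l).-1 l.
Proof.
case: l => [|y l] //=; elim: l y => [|z l IH] y //=.
by rewrite IH.
Qed.

Lemma interE g ts : inter g ts = take (size ts).-1 (scanl (@step Q) g ts).
Proof. by rewrite /inter behead_belast size_scanl. Qed.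

Lemma allpos_cat l1 l2 : allpos (l1 ++ l2) = allpos l1 && allpos l2.
Proof. by rewrite /allpos all_cat. Qed.

Lemma allpos_take n l : allpos l -> allpos (take n l).
Proof. by rewrite -{1}(cat_take_drop n l) /allpos all_cat => /andP[]. Qed.

Lemma allpos_drop n l : allpos l -> allpos (drop n l).
Proof. by rewrite -{1}(cat_take_drop n l) /allpos all_cat => /andP[]. Qed.

Lemma scanl_take g k ts : scanl (@step Q) g (take k ts) = take k (scanl (@step Q) g ts).
Proof.
elim: ts g k => [|t ts IH] g [|k] //=. by rewrite IH.
Qed.

Lemma scanl_drop g k ts :
  scanl (@step Q) (ptarget g (take k ts)) (drop k ts) = drop k (scanl (@step Q) g ts).
Proof.
have E := scanl_cat (@step Q) g (take k ts) (drop k ts).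
rewrite cat_take_drop in E; rewrite E drop_cat size_scanl size_take.
case: (ltnP k (size ts)) => H.
- by rewrite ltnn subnn drop0.
- rewrite (drop_oversize H) /=.
  by rewrite ltnNge H.
Qed.

Lemma prefix_allpos g ts k : allpos (inter g ts) -> (k < size ts)%N ->
  allpos (scanl (@step Q) g (take k ts)).
Proof.
rewrite interE scanl_take => H Hk.
have := allpos_take k H; rewrite take_takel //; lia.
Qed.

Lemma suffix_pbl g ts k : allpos (inter g ts) ->
  allpos (inter (ptarget g (take k ts)) (drop k ts)).
Proof.
case: (ltnP k (size ts)) => Hk; last by rewrite drop_oversize.
rewrite !interE scanl_drop size_drop take_drop => H.
apply: allpos_drop.
by have -> : ((size ts - k).-1 + k = (size ts).-1)%N by lia.
Qed.

Lemma allpos_pbl g ts : allpos (scanl (@step Q) g ts) -> allpos (inter g ts).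
Proof. by rewrite interE; apply: allpos_take. Qed.

Lemma pbl_cat g s1 s2 : allpos (scanl (@step Q) g s1) ->
  allpos (inter (ptarget g s1) s2) -> allpos (inter g (s1 ++ s2)).
Proof.
rewrite !interE scanl_cat size_cat => H1 H2.
case: s2 H2 => [|t s2] H2.
- by rewrite /= cats0; apply: allpos_take.
- rewrite take_cat size_scanl ifF; last by rewrite /=; lia.
  rewrite /allpos all_cat; apply/andP; split => //.
  by have -> : ((size s1 + size (t :: s2)).-1 - size s1 = (size (t::s2)).-1)%N by rewrite /=; lia.
Qed.

Lemma cnt0_pbl g ts : allpos (inter g ts) -> (cnt0 (scanl (@step Q) g ts) <= 1)%N.
Proof.
rewrite interE => H; rewrite -(cat_take_drop (size ts).-1 (scanl (@step Q) g ts)).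
rewrite /cnt0 count_cat.
have -> : count (fun c : conf Q => c.2 == 0%N) (take (size ts).-1 (scanl (@step Q) g ts)) = 0%N.
  apply/eqP; rewrite -leqn0 leqNgt -has_count; apply/hasPn => c Hc.
  by move/allP: H => /(_ c Hc); rewrite /= eqn0Ngt => ->.
rewrite add0n; apply: leq_trans (count_size _ _) _.
rewrite size_drop size_scanl; lia.
Qed.

Lemma confs_cnt0 g ts :
  cnt0 (confs g ts) = ((g.2 == 0%N) + cnt0 (scanl (@step Q) g ts))%N.
Proof. by []. Qed.

Lemma cnt0_cat g s1 s2 : cnt0 (scanl (@step Q) g (s1 ++ s2)) =
  (cnt0 (scanl (@step Q) g s1) + cnt0 (scanl (@step Q) (ptarget g s1) s2))%N.
Proof. by rewrite scanl_cat /cnt0 count_cat. Qed.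

Lemma ptarget_in g ts : ts != [::] -> ptarget g ts \in scanl (@step Q) g ts.
Proof.
elim: ts g => [|t ts IH] g //= _; case: ts IH => [|t' ts] IH.
- by rewrite inE.
- by rewrite inE IH ?orbT.
Qed.

Lemma arc_cnt0 g ts : (ptarget g ts).2 = 0%N -> ts != [::] ->
  (1 <= cnt0 (scanl (@step Q) g ts))%N.
Proof.
move=> H0 Hne; rewrite /cnt0 -has_count; apply/hasP.
by exists (ptarget g ts); [apply: ptarget_in | rewrite H0].
Qed.

End Pos.
Section Pump.
Variables (Q : finType) (O : OCS Q).
Implicit Types (g : conf Q) (ts s : seq (trans Q)) (t : trans Q) (l : seq (conf Q)).

Definition hsrc (q : Q) (ts : seq (trans Q)) : bool :=
  if ts is t :: _ then tsrc t == q else true.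

Lemma high_path ts q c : consistent ts -> all (Tpos O) ts ->
  hsrc q ts -> (size ts < c)%N ->
  is_path O (q, c) ts /\ allpos (scanl (@step Q) (q, c) ts).
Proof.
elim: ts q c => [|t ts IH] q c //= Hc /andP[Ht Hall] /eqP Hq Hs.
have Hf : fireable O (q, c) t by rewrite /fireable /= Hq eqxx Ht /=; lia.
have Hcnt := step_cnt Hf.
have Hpos : (0 < (step (q, c) t).2)%N.
  by case: (eff_pos Ht) Hcnt => [->|[->|->]] /=; lia.
rewrite Hf Hpos /=.
have Hsz : (size ts < (step (q, c) t).2)%N.
  by case: (eff_pos Ht) Hcnt => [->|[->|->]] /=; lia.
have Hsort : consistent ts by move: Hc; rewrite /consistent /=; apply: path_sorted.
have Hq' : hsrc (step (q, c) t).1 ts.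
  by clear IH Hall Hsz Hsort Hs; case: ts Hc => [|t' ts] //= /andP[/eqP <- _].
have := IH (step (q, c) t).1 (step (q, c) t).2 Hsort Hall Hq' Hsz.
by rewrite -surjective_pairing.
Qed.

Lemma all_flatten_nseq (P : pred (trans Q)) k s : all P s -> all P (flatten (nseq k s)).
Proof. by move=> H; elim: k => [|k IH] //=; rewrite all_cat H IH. Qed.

Lemma peff_nseq k s : peff (flatten (nseq k s)) = (k%:Z * peff s)%R.
Proof.
elim: k => [|k IH]; first by rewrite /peff big_nil mul0r.
by rewrite /= peff_cat IH -addn1 PoszD mulrDl mul1r addrC.
Qed.

Lemma size_flatten_nseq k s : size (flatten (nseq k s)) = (k * size s)%N.
Proof. by elim: k => [|k IH] //=; rewrite size_cat IH mulSn. Qed.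

Lemma pump_up sg q c A : all (Tpos O) sg -> is_path O (q, c) sg ->
  allpos (scanl (@step Q) (q, c) sg) -> (ptarget (q, c) sg).1 = q ->
  peff sg = Posz A -> (0 < A)%N ->
  forall k, [/\ is_path O (q, c) (flatten (nseq k sg)),
    allpos (scanl (@step Q) (q, c) (flatten (nseq k sg))) &
    ptarget (q, c) (flatten (nseq k sg)) = (q, c + k * A)%N].
Proof.
move=> Hall Hp Hpos Hst Heff HA k; elim: k c Hp Hpos Hst => [|k IH] c Hp Hpos Hst.
  by split => //=; rewrite addn0.
have Ht : ptarget (q, c) sg = (q, c + A)%N.
  apply: injective_projections => //=; apply/eqP; rewrite -eqz_nat.
  by rewrite (ptarget_cnt Hp) Heff.
case: (IH c Hp Hpos Hst) => Hp' Hpos' Ht'.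
have [H1 H2 H3] := shift_path A (all_flatten_nseq k Hall) Hp'.
rewrite /= is_path_cat ptarget_cat scanl_cat -/(ptarget (q, c) sg) Ht allpos_cat.
have E : (q, c + A)%N = shc A (q, c) by [].
rewrite E H1 H2 H3 Hp Ht' Hpos /shc /=; split => //.
- exact: allpos_shift.
- congr pair; rewrite mulSn; lia.
Qed.

Lemma pump_down sg q y B X : all (Tpos O) sg -> is_path O (q, y + B)%N sg ->
  (ptarget (q, y + B)%N sg) = (q, y) -> (0 < B)%N ->
  allpos (inter (q, y + B)%N (sg ++ X)) ->
  forall m, [/\ is_path O (q, y + m.+1 * B)%N (flatten (nseq m.+1 sg)),
    ptarget (q, y + m.+1 * B)%N (flatten (nseq m.+1 sg)) = (q, y) &
    allpos (inter (q, y + m.+1 * B)%N (flatten (nseq m.+1 sg) ++ X))].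
Proof.
move=> Hall Hp Ht HB Hpbl m; elim: m => [|m [IH1 IH2 IH3]].
  by rewrite /= cats0 mul1n.
have E : (q, y + m.+2 * B)%N = shc (m.+1 * B) (q, y + B)%N
  by rewrite /shc /=; congr pair; rewrite mulSn; lia.
have [H1 H2 H3] := shift_path (m.+1 * B) Hall Hp.
have Ht' : ptarget (q, y + m.+2 * B)%N sg = (q, y + m.+1 * B)%N
  by rewrite E H3 Ht /shc.
rewrite [flatten _]/= is_path_cat ptarget_cat Ht' IH1 IH2 -catA; split => //.
- by rewrite E H1.
- apply: pbl_cat; last by rewrite Ht'.
  rewrite E H2; apply: allpos_shift; lia.
Qed.

Lemma bezout_nat x x' A B : (0 < A)%N -> (0 < B)%N ->
  x = x' %[mod gcdn A B] ->
  exists k m, [/\ (0 < k)%N, (0 < m)%N & (x + k * A = x' + m * B)%N].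
Proof.
move=> HA HB Hmod.
set g := gcdn A B.
rewrite -/g in Hmod.
have Ex := divn_eq x g; have Ex' := divn_eq x' g.
set qx := (x %/ g)%N in Ex *; set qx' := (x' %/ g)%N in Ex' *.
set r := (x %% g)%N in Ex Hmod; set r' := (x' %% g)%N in Ex' Hmod.
case: (leqP qx qx') => Hq.
- have [a _ /dvdnP [u Hu]] := Bezoutl B HA.
  rewrite -/g in Hu.
  exists ((qx' - qx) * u + B)%N, ((qx' - qx) * a + A)%N.
  split; [by rewrite addn_gt0 HB orbT | by rewrite addn_gt0 HA orbT |].
  have Hd : qx' = (qx + (qx' - qx))%N by lia.
  set d := (qx' - qx)%N in Hd *; clearbody d.
  rewrite Ex Ex' Hd Hmod mulnDl -mulnA -Hu.
  rewrite !mulnDl !mulnDr !mulnA (mulnC B A); lia.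
- have [b _ /dvdnP [v Hv]] := Bezoutr A HB.
  rewrite -/g in Hv.
  exists ((qx - qx') * b + B)%N, ((qx - qx') * v + A)%N.
  split; [by rewrite addn_gt0 HB orbT | by rewrite addn_gt0 HA orbT |].
  have Hd : qx = (qx' + (qx - qx'))%N by lia.
  set d := (qx - qx')%N in Hd *; clearbody d.
  rewrite Ex Ex' Hd Hmod !mulnDl -!mulnA -Hv.
  rewrite !mulnDr !mulnA (mulnC B A) (mulnC d b); lia.
Qed.

End Pump.
Section Cyc.
Variables (Q : finType) (O : OCS Q).
Implicit Types (g : conf Q) (ts s : seq (trans Q)) (t : trans Q) (l : seq (conf Q)).

Lemma cyc_facts s : is_cycle O s ->
  [/\ all (Tpos O) s, consistent s &
      exists t s', s = t :: s' /\ tsrc t = ttgt (last t s')].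
Proof.
case/and3P => H1 H2; case: s H1 H2 => [|t s'] // H1 H2 /eqP H3.
by split => //; exists t, s'.
Qed.

Lemma cyc_state s q c : is_cycle O s -> base_state s = Some q -> (ptarget (q, c) s).1 = q.
Proof.
case/cyc_facts => _ _ [t [s' [-> Hts]]] /= [<-].
by rewrite ptarget_state /= last_map -Hts.
Qed.

Lemma cyc_size s (S : {set Q}) : is_simple_cycle O s -> contained_in S s -> (size s <= #|S|)%N.
Proof.
case/andP => _ Hu Hc; rewrite -(size_map (@tsrc Q)).
rewrite -(card_uniqP Hu); apply: subset_leq_card; apply/subsetP => x /mapP [t Ht ->].
by move/allP: Hc => /(_ t Ht) /andP[].
Qed.

Lemma peff_le s : all (Tpos O) s -> (absz (peff s) <= size s)%N.
Proof.
elim: s => [|t s IH] /=; first by rewrite /peff big_nil.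
move=> /andP[Ht /IH H]; rewrite peff_cons.
by case: (eff_pos Ht) => [->|[->|->]]; lia.
Qed.

Lemma tpos_from g ts : is_path O g ts -> (0 < g.2)%N -> allpos (inter g ts) -> all (Tpos O) ts.
Proof.
elim: ts g => [|t ts IH] g //= /andP[Hf Hp] Hg Hi.
have Ht : Tpos O t.
  by move: Hf; rewrite /fireable => /andP[_ /orP[/andP[]|/andP[_ /eqP H]]] //; lia.
rewrite Ht /=; case: ts IH Hp Hi => [|t' ts] // IH Hp Hi.
move: Hi; rewrite interE /= => /andP[H1 H2].
by apply: (IH (step g t)) => //; rewrite interE.
Qed.

Lemma flatten_nseqS (T : Type) k (s : seq T) : flatten (nseq k.+1 s) = flatten (nseq k s) ++ s.
Proof. elim: k => [|k IH] /=; first by rewrite cats0. by rewrite -catA -IH. Qed.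

End Cyc.
Section Count.

Lemma inj_count_seq (K C : finType) (I : seq K) (f : K -> nat) (cls : K -> nat -> C) :
  uniq I ->
  (forall i j p p', i \in I -> j \in I -> (p <= f i)%N -> (p' <= f j)%N ->
     cls i p = cls j p' -> i = j /\ p = p') ->
  uniq (flatten [seq [seq cls i p | p <- iota 0 (f i).+1] | i <- I]) /\
  size (flatten [seq [seq cls i p | p <- iota 0 (f i).+1] | i <- I]) = (\sum_(i <- I) (f i).+1)%N.
Proof.
elim: I => [|i I IH]; first by rewrite big_nil.
rewrite cons_uniq => /andP[HiI Hu] Hinj.
have Hinj' : forall i0 j p p', i0 \in I -> j \in I -> (p <= f i0)%N -> (p' <= f j)%N ->
     cls i0 p = cls j p' -> i0 = j /\ p = p'.
  by move=> i0 j p p' H1 H2; apply: Hinj; rewrite inE ?H1 ?H2 orbT.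
case: (IH Hu Hinj') => U1 S1.
set blk := fun i => [seq cls i p | p <- iota 0 (f i).+1].
have -> : [seq [seq cls i p | p <- iota 0 (f i).+1] | i <- i :: I] = blk i :: map blk I by [].
have -> : flatten (blk i :: map blk I) = blk i ++ flatten (map blk I) by [].
split; last by rewrite size_cat size_map size_iota S1 big_cons.
rewrite cat_uniq U1 andbT; apply/andP; split.
- rewrite map_inj_in_uniq ?iota_uniq // => p p' Hp Hp' E.
  rewrite !mem_iota in Hp Hp'.
  by case: (Hinj i i p p' (mem_head _ _) (mem_head _ _) ltac:(lia) ltac:(lia) E).
- apply/hasPn => y /flattenP [s /mapP [j Hj ->] /mapP [p' Hp' ->]].
  apply/negP => /mapP [p Hp E].
  rewrite !mem_iota in Hp Hp'.
  have [Eij _] := Hinj i j p p' (mem_head _ _) ltac:(by rewrite inE Hj orbT) ltac:(lia) ltac:(lia) (esym E).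
  by move: HiI; rewrite Eij Hj.
Qed.

Lemma inj_count (K C : finType) (A : {pred K}) (f : K -> nat) (cls : K -> nat -> C) :
  (forall i j p p', i \in A -> j \in A -> (p <= f i)%N -> (p' <= f j)%N ->
     cls i p = cls j p' -> i = j /\ p = p') ->
  (\sum_(i in A) (f i).+1 <= #|C|)%N.
Proof.
move=> Hinj; rewrite -big_enum.
have Hinj' : forall i j p p', i \in enum A -> j \in enum A -> (p <= f i)%N -> (p' <= f j)%N ->
     cls i p = cls j p' -> i = j /\ p = p'.
  by move=> i j p p'; rewrite !mem_enum; apply: Hinj.
case: (inj_count_seq (enum_uniq A) Hinj') => U S.
rewrite -S cardE; apply: uniq_leq_size U _ => x _; exact: mem_enum.
Qed.

End Count.

Section SCC.
Variables (Q : finType) (O : OCS Q).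

Lemma SCC_mem (S : {set Q}) p : is_SCC O S -> p \in S ->
  S = [set q | connect (edge O) p q && connect (edge O) q p].
Proof.
case=> r ->; rewrite inE => /andP[Hrp Hpr]; apply/setP => q; rewrite !inE.
apply/andP/andP => [[H1 H2]|[H1 H2]]; split.
- exact: connect_trans Hpr H1.
- exact: connect_trans H2 Hrp.
- exact: connect_trans Hrp H1.
- exact: connect_trans H2 Hpr.
Qed.

Lemma SCC_disj (S T : {set Q}) : is_SCC O S -> is_SCC O T -> S != T -> [disjoint S & T].
Proof.
move=> HS HT Hne; apply/pred0P => x /=; apply/negP => /andP[HxS HxT].
by move/eqP: Hne; apply; rewrite (SCC_mem HS HxS) (SCC_mem HT HxT).
Qed.

Lemma SCC_sum (P : {set {set Q}}) : {in P, forall S, is_SCC O S} ->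
  (\sum_(S in P) #|S| <= #|Q|)%N.
Proof.
move=> H; have : trivIset P.
  apply/trivIsetP => S T HS HT; exact: SCC_disj (H S HS) (H T HT).
rewrite /trivIset => /eqP ->; exact: max_card.
Qed.

End SCC.
Section Main.
Variables (Q : finType) (O : OCS Q) (sigp sigm : {set Q} -> seq (trans Q))
  (alpha beta : conf Q) (rhos : seq (seq (trans Q))) (isN : pred nat)
  (SS TT : nat -> {set Q}) (D : nat -> ndec Q).
Implicit Types (g : conf Q) (ts s : seq (trans Q)) (t : trans Q) (l : seq (conf Q)).
Hypothesis Hfix : fixed_cycles O sigp sigm.
Hypothesis Ha0 : alpha.2 = 0%N.
Hypothesis Hpath : is_path O alpha (flatten rhos).
Hypothesis Htgt : ptarget alpha (flatten rhos) = beta.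
Hypothesis Hmin : forall ts, is_path O alpha ts -> ptarget alpha ts = beta ->
     (count (fun c : conf Q => c.2 == 0%N) (confs alpha (flatten rhos))
      <= count (fun c : conf Q => c.2 == 0%N) (confs alpha ts))%N.
Hypothesis Harc : forall i, (i < size rhos)%N ->
     is_arc O (ptarget alpha (flatten (take i rhos))) (nth [::] rhos i).
Hypothesis HN : forall i, (i < size rhos)%N -> isN i ->
     let g := ptarget alpha (flatten (take i rhos)) in
     normal_dec O sigp sigm (SS i) (TT i) g (nth [::] rhos i) (D i) /\
     good_dec O sigp sigm (SS i) (TT i) g (D i).

Definition gs i := ptarget alpha (flatten (take i rhos)).
Definition arc i := nth [::] rhos i.
Definition Aof (S : {set Q}) := absz (peff (sigp S)).
Definition Bof (T : {set Q}) := absz (peff (sigm T)).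
Definition g1 i := ptarget (gs i) (npref (D i)).
Definition g2 i := ptarget (g1 i) (nup (D i)).
Definition g3 i := ptarget (g2 i) (ncap (D i)).
Definition g4 i := ptarget (g3 i) (ndown (D i)).
Definition W i := nup (D i) ++ ncap (D i) ++ ndown (D i).

Lemma N_unpack i : (i < size rhos)%N -> isN i ->
  [/\ (is_SCC O (SS i) /\ is_SCC O (TT i)) /\ (pos_enabled O (SS i) /\ neg_enabled O (TT i)),
      arc i = npref (D i) ++ W i ++ nsuff (D i),
      nup (D i) = flatten (nseq (na (D i)) (sigp (SS i))) /\
        ndown (D i) = flatten (nseq (nb (D i)) (sigm (TT i))),
      Some (g2 i).1 = base_state (sigp (SS i)) /\ Some (g3 i).1 = base_state (sigm (TT i)) &
      [/\ (na (D i) * Aof (SS i) <= 2 * size (ncap (D i)) + 2 * lcmn (Aof (SS i)) (Bof (TT i)))%N,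
      (nb (D i) * Bof (TT i) <= 2 * size (ncap (D i)) + 2 * lcmn (Aof (SS i)) (Bof (TT i)))%N,
      (forall s, infix s (ncap (D i)) -> is_cycle O s ->
         ~~ ((gcdn (Aof (SS i)) (Bof (TT i)))%:Z %| peff s)%Z) &
      ((nQ Q < (g2 i).2)%N /\ (nQ Q < (g3 i).2)%N)]].
Proof.
move=> Hi Hn; case: (HN Hi Hn) => [[H1 [H2 [H3 [_ [H5 H6]]]]] [G1 G2 G3 G4 _]].
by split => //; rewrite /arc H3 /W -!catA.
Qed.


Lemma arc_basic i : (i < size rhos)%N ->
  [/\ is_path O (gs i) (arc i), (gs i).2 = 0%N, (ptarget (gs i) (arc i)).2 = 0%N &
      allpos (inter (gs i) (arc i))].
Proof. by move=> Hi; case/and4P: (Harc Hi) => H1 /eqP H2 /eqP H3 H4. Qed.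

Lemma gsS i : (i < size rhos)%N -> gs i.+1 = ptarget (gs i) (arc i).
Proof.
by move=> Hi; rewrite /gs (take_nth [::] Hi) -cats1 flatten_cat ptarget_cat /= cats0.
Qed.

Lemma sigp_facts i : (i < size rhos)%N -> isN i ->
  let s := sigp (SS i) in
  [/\ is_cycle O s, peff s = Posz (Aof (SS i)), (0 < Aof (SS i))%N,
      (size s <= #|SS i|)%N & all (Tpos O) s].
Proof.
move=> Hi Hn /=; case: (N_unpack Hi Hn) => [[[HS _] [HpS _]] _ _ _ _].
case/and3P: (Hfix.1 _ HS HpS) => Hsc Hc Hp.
have Hcy : is_cycle O (sigp (SS i)) by case/andP: Hsc.
split => //.
- by rewrite /Aof; move: Hp; case: (peff _).
- by rewrite /Aof; move: Hp; case: (peff _) => // n; rewrite ltz_nat.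
- exact: cyc_size Hsc Hc.
- by case: (cyc_facts Hcy).
Qed.

Lemma sigm_facts i : (i < size rhos)%N -> isN i ->
  let s := sigm (TT i) in
  [/\ is_cycle O s, peff s = (- Posz (Bof (TT i)))%R, (0 < Bof (TT i))%N,
      (size s <= #|TT i|)%N & all (Tpos O) s].
Proof.
move=> Hi Hn /=; case: (N_unpack Hi Hn) => [[[_ HT] [_ HnT]] _ _ _ _].
case/and3P: (Hfix.2 _ HT HnT) => Hsc Hc Hp.
have Hcy : is_cycle O (sigm (TT i)) by case/andP: Hsc.
split => //.
- by rewrite /Bof; move: Hp; case: (peff _) => // n _; rewrite NegzE.
- by rewrite /Bof; move: Hp; case: (peff _).
- exact: cyc_size Hsc Hc.
- by case: (cyc_facts Hcy).
Qed.

Lemma arc_split i : (i < size rhos)%N -> isN i ->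
  [/\ is_path O (gs i) (npref (D i)), is_path O (g1 i) (W i),
      is_path O (g4 i) (nsuff (D i)), ptarget (g1 i) (W i) = g4 i &
      ptarget (g4 i) (nsuff (D i)) = ptarget (gs i) (arc i)].
Proof.
move=> Hi Hn; case: (arc_basic Hi) => Hp _ _ _.
case: (N_unpack Hi Hn) => _ Ha _ _ _.
have E : ptarget (g1 i) (W i) = g4 i by rewrite /W !ptarget_cat.
move: Hp; rewrite Ha !is_path_cat -/(g1 i) E => /and3P[H1 H2 H3].
by split => //; rewrite ptarget_cat ptarget_cat -/(g1 i) E.
Qed.


Lemma pbl_suffix g s1 s2 : allpos (inter g (s1 ++ s2)) -> allpos (inter (ptarget g s1) s2).
Proof.
move=> H; have := suffix_pbl (size s1) H.
by rewrite take_size_cat // drop_size_cat.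
Qed.

Lemma scanl_split g s : s != [::] -> scanl (@step Q) g s = inter g s ++ [:: ptarget g s].
Proof.
case/lastP: s => [|s t] // _.
rewrite interE size_rcons /= -cats1 scanl_cat take_size_cat ?size_scanl //.
by rewrite ptarget_cat.
Qed.

Lemma pbl_prefix g s1 s2 : allpos (inter g (s1 ++ s2)) ->
  (0 < (ptarget g s1).2)%N -> allpos (scanl (@step Q) g s1).
Proof.
move=> H Hp; case: s2 H => [|t s2] H.
- rewrite cats0 in H; case: s1 H Hp => [|t s1] // H Hp.
  by rewrite scanl_split // allpos_cat H /= Hp.
- have := prefix_allpos (k := size s1) H; rewrite take_size_cat //.
  by apply; rewrite size_cat /=; lia.
Qed.

Lemma nQ_card : nQ Q = #|Q|. Proof. by []. Qed.

Lemma Wfacts i : (i < size rhos)%N -> isN i ->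
  [/\ all (Tpos O) (W i), (0 < (g2 i).2)%N, allpos (inter (g1 i) (W i ++ nsuff (D i))),
      Some (g1 i).1 = base_state (sigp (SS i)) & Some (g4 i).1 = base_state (sigm (TT i))].
Proof.
move=> Hi Hn.
case: (N_unpack Hi Hn) => _ Ha [Hup Hdn] [Hb2 Hb3] [_ _ _ [Hn2 Hn3]].
case: (sigp_facts Hi Hn) => Hcp _ _ _ Htp.
case: (sigm_facts Hi Hn) => Hcm _ _ _ Htm.
case: (arc_basic Hi) => Hp _ _ Hpbl.
case: (arc_split Hi Hn) => _ HW _ _ _.
have Hg2 : (0 < (g2 i).2)%N by lia.
have Hpbl1 : allpos (inter (g1 i) (W i ++ nsuff (D i))).
  by move: Hpbl; rewrite Ha => /pbl_suffix.
have Htcap : all (Tpos O) (ncap (D i) ++ ndown (D i) ++ nsuff (D i)).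
  apply: (tpos_from _ Hg2).
  - move: Hp; rewrite Ha /W -!catA is_path_cat -/(g1 i) is_path_cat -/(g2 i).
    by case/andP => _ /andP[_ ->].
  - by move: Hpbl1; rewrite /W -!catA => /(pbl_suffix (s1 := nup (D i))).
split => //.
- rewrite /W !all_cat Hup Hdn !all_flatten_nseq //=.
  by move: Htcap; rewrite all_cat => /andP[->].
- case: (cyc_facts Hcp) => _ _ [t [s' [Ht _]]].
  case E: (na (D i)) Hup => [|k] Hup.
    by rewrite -Hb2 /g2 Hup.
  move: HW; rewrite /W Hup /= Ht /= => /andP[/andP[/eqP H _] _].
  by rewrite /base_state /= H.
- case: (cyc_facts Hcm) => _ _ [t [s' [Ht Hts]]].
  case E: (nb (D i)) Hdn => [|k] Hdn.
    by rewrite -Hb3 /g4 Hdn.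
  rewrite /g4 Hdn flatten_nseqS ptarget_cat ptarget_state Ht /= last_map -Hts.
  by move: Hb3; rewrite Ht /=.
Qed.


Lemma card_le_nQ (S : {set Q}) : (#|S| <= nQ Q)%N.
Proof. by rewrite nQ_card max_card. Qed.

Lemma up_first i : (i < size rhos)%N -> isN i ->
  is_path O (g1 i) (sigp (SS i)) /\ allpos (scanl (@step Q) (g1 i) (sigp (SS i))).
Proof.
move=> Hi Hn.
case: (N_unpack Hi Hn) => _ Ha [Hup Hdn] [Hb2 Hb3] [_ _ _ [Hn2 Hn3]].
case: (sigp_facts Hi Hn) => Hcp Heff HA Hsz Htp.
case: (Wfacts Hi Hn) => HT Hg2 Hpbl1 Hs1 Hs4.
case: (arc_split Hi Hn) => _ HW _ _ _.
case: (cyc_facts Hcp) => _ Hcons [t [s' [Ht Hts]]].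
case E: (na (D i)) Hup => [|k] Hup.
- have Eg : g2 i = g1 i by rewrite /g2 Hup.
  have Hsrc : hsrc (g1 i).1 (sigp (SS i)).
    by move: Hs1; rewrite Ht /base_state /= => [[->]]; rewrite /= eqxx.
  have Hlt : (size (sigp (SS i)) < (g1 i).2)%N.
    by have := card_le_nQ (SS i); rewrite -Eg; lia.
  have := high_path Hcons Htp Hsrc Hlt.
  by rewrite -surjective_pairing.
- have Hp : is_path O (g1 i) (sigp (SS i)).
    by move: HW; rewrite /W Hup /= -!catA is_path_cat => /andP[].
  split => //.
  apply: (pbl_prefix (s2 := flatten (nseq k (sigp (SS i))) ++ ncap (D i) ++ ndown (D i) ++ nsuff (D i))).
    by move: Hpbl1; rewrite /W Hup /= -!catA.
  have := ptarget_cnt Hp; rewrite Heff; lia.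
Qed.

Lemma down_last i : (i < size rhos)%N -> isN i ->
  let t := (g4 i).1 in let y := (g4 i).2 in
  [/\ is_path O (t, y + Bof (TT i))%N (sigm (TT i)),
      ptarget (t, y + Bof (TT i))%N (sigm (TT i)) = (t, y) &
      allpos (inter (t, y + Bof (TT i))%N (sigm (TT i) ++ nsuff (D i)))].
Proof.
move=> Hi Hn /=.
case: (N_unpack Hi Hn) => _ Ha [Hup Hdn] [Hb2 Hb3] [_ _ _ [Hn2 Hn3]].
case: (sigm_facts Hi Hn) => Hcm Heff HB Hsz Htm.
case: (Wfacts Hi Hn) => HT Hg2 Hpbl1 Hs1 Hs4.
case: (arc_split Hi Hn) => _ HW _ HWt _.
case: (cyc_facts Hcm) => _ Hcons [t [s' [Ht Hts]]].
have Hsrc : tsrc t = (g4 i).1 by move: Hs4; rewrite Ht /base_state /= => [[->]].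
case E: (nb (D i)) Hdn => [|k] Hdn.
- have Eg : g4 i = g3 i by rewrite /g4 Hdn.
  have Hlt : (size (sigm (TT i)) < (g4 i).2 + Bof (TT i))%N.
    by have := card_le_nQ (TT i); rewrite Eg; lia.
  have Hsrc' : hsrc (g4 i).1 (sigm (TT i)) by rewrite Ht /= Hsrc eqxx.
  have [Hp Hpos] := high_path Hcons Htm Hsrc' Hlt.
  have Htg : ptarget ((g4 i).1, (g4 i).2 + Bof (TT i))%N (sigm (TT i)) = ((g4 i).1, (g4 i).2).
    apply: injective_projections => /=.
    + by apply: (cyc_state (O := O)) => //; rewrite -Hs4.
    + apply/eqP; rewrite -eqz_nat (ptarget_cnt Hp) Heff /=; apply/eqP; lia.
  split => //.
  apply: pbl_cat => //; rewrite Htg -surjective_pairing -HWt.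
  exact: pbl_suffix.
- set F := flatten (nseq k (sigm (TT i))).
  set h := ptarget (g3 i) F.
  have Hdn' : ndown (D i) = F ++ sigm (TT i) by rewrite Hdn flatten_nseqS.
  have Hp3 : is_path O (g3 i) (ndown (D i)).
    by move: HW; rewrite /W is_path_cat -/(g2 i) is_path_cat -/(g3 i) => /and3P[].
  have Hph : is_path O h (sigm (TT i)) by move: Hp3; rewrite Hdn' is_path_cat => /andP[].
  have Hth : ptarget h (sigm (TT i)) = g4 i by rewrite /g4 Hdn' ptarget_cat.
  have Hh1 : h.1 = (g4 i).1.
    by move: Hph; rewrite Ht => /path_head <-.
  have Hh2 : h.2 = ((g4 i).2 + Bof (TT i))%N.
    have := ptarget_cnt Hph; rewrite Hth Heff => Hc.
    apply/eqP; rewrite -eqz_nat; apply/eqP; lia.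
  have Eh : ((g4 i).1, (g4 i).2 + Bof (TT i))%N = h by rewrite -Hh1 -Hh2 -surjective_pairing.
  rewrite Eh Hth -surjective_pairing; split => //.
  have := pbl_suffix (g := g1 i) (s1 := nup (D i) ++ ncap (D i) ++ F) (s2 := sigm (TT i) ++ nsuff (D i)).
  rewrite !ptarget_cat -/(g2 i) -/(g3 i) -/h; apply.
  by move: Hpbl1; rewrite /W Hdn' -!catA.
Qed.


Lemma all_take_ (P : pred (trans Q)) n s : all P s -> all P (take n s).
Proof. by rewrite -{1}(cat_take_drop n s) all_cat => /andP[]. Qed.

Lemma all_drop_ (P : pred (trans Q)) n s : all P s -> all P (drop n s).
Proof. by rewrite -{1}(cat_take_drop n s) all_cat => /andP[]. Qed.

Lemma pbl_prefix2 g s1 t s2 : allpos (inter g (s1 ++ t :: s2)) -> allpos (scanl (@step Q) g s1).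
Proof.
move=> H; have := prefix_allpos (k := size s1) H; rewrite take_size_cat //.
by apply; rewrite size_cat /=; lia.
Qed.

Lemma Wsuff_nonempty i : (i < size rhos)%N -> isN i -> W i ++ nsuff (D i) != [::].
Proof.
move=> Hi Hn; apply/negP => /eqP E.
case: (N_unpack Hi Hn) => _ Ha _ _ [_ _ _ [Hn2 _]].
case: (arc_basic Hi) => _ _ H0 _.
have Eup : nup (D i) = [::] by move: E; rewrite /W; case: (nup _).
have : g2 i = ptarget (gs i) (arc i) by rewrite Ha E cats0 /g2 Eup.
by move=> E2; rewrite E2 H0 in Hn2.
Qed.

Lemma pref_pos i : (i < size rhos)%N -> isN i -> allpos (scanl (@step Q) (gs i) (npref (D i))).
Proof.
move=> Hi Hn; have := Wsuff_nonempty Hi Hn.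
case: (N_unpack Hi Hn) => _ Ha _ _ _.
case: (arc_basic Hi) => _ _ _; rewrite Ha.
case: (W i ++ nsuff (D i)) => [|t s2] // H _; exact: pbl_prefix2 H.
Qed.

Lemma arc_nonempty i : (i < size rhos)%N -> isN i -> arc i != [::].
Proof.
move=> Hi Hn; have := Wsuff_nonempty Hi Hn; case: (N_unpack Hi Hn) => _ Ha _ _ _.
by rewrite Ha; case: (npref _); case: (W i ++ _).
Qed.

Definition Zc u := cnt0 (scanl (@step Q) (gs u) (arc u)).
Definition Fz u := cnt0 (scanl (@step Q) alpha (flatten (take u rhos))).

Lemma Fz_step u : (u < size rhos)%N -> Fz u.+1 = (Fz u + Zc u)%N.
Proof.
by move=> Hl; rewrite /Fz (take_nth [::] Hl) -cats1 flatten_cat cnt0_cat /= cats0.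
Qed.

Lemma Fz_mono u d : (u + d <= size rhos)%N -> (Fz u <= Fz (u + d))%N.
Proof.
elim: d => [|d IH] H; first by rewrite addn0.
rewrite addnS Fz_step; last by lia.
apply: leq_trans (IH _) _; lia.
Qed.

Lemma Zc_pos u : (u < size rhos)%N -> isN u -> (1 <= Zc u)%N.
Proof.
move=> Hl Hn; case: (arc_basic Hl) => _ _ H0 _.
exact: arc_cnt0 H0 (arc_nonempty Hl Hn).
Qed.

Lemma flatten_split u : flatten rhos = flatten (take u rhos) ++ flatten (drop u rhos).
Proof. by rewrite -flatten_cat cat_take_drop. Qed.


Lemma pcat g s1 s2 : is_path O g s1 -> is_path O (ptarget g s1) s2 -> is_path O g (s1 ++ s2).
Proof. by rewrite is_path_cat => -> ->. Qed.

Lemma arith_end (a fj fj1 fi fi1 zi zj x r : nat) : fj1 = (fj + zj)%N -> fi1 = (fi + zi)%N ->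
  (fi1 <= fj)%N -> (x <= 1)%N -> (1 <= zi)%N -> (1 <= zj)%N ->
  (a + (fj1 + r) <= a + (fi + x + r))%N -> False.
Proof. lia. Qed.

Lemma merge i j p p' : (i < j)%N -> (j < size rhos)%N -> isN i -> isN j ->
  (p <= size (W i))%N -> (p' <= size (W j))%N ->
  (ptarget (g1 i) (take p (W i))).1 = (ptarget (g1 j) (take p' (W j))).1 ->
  (ptarget (g1 i) (take p (W i))).2 = (ptarget (g1 j) (take p' (W j))).2
     %[mod gcdn (Aof (SS i)) (Bof (TT j))] -> False.
Proof.
move=> Hij Hj Hni Hnj Hp Hp'.
have Hi : (i < size rhos)%N by apply: ltn_trans Hij Hj.
set c := ptarget (g1 i) (take p (W i)); set c' := ptarget (g1 j) (take p' (W j)).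
move=> Hst Hmod.
case: (sigp_facts Hi Hni) => Hcp Heffp HA _ Htp.
case: (sigm_facts Hj Hnj) => Hcm Heffm HB _ Htm.
have [k [m [Hk Hm Hkm]]] := bezout_nat HA HB Hmod.
case: m Hm Hkm => [|m0] // _ Hkm.
case: (arc_split Hi Hni) => Hpref HWi _ HWti _.
case: (Wfacts Hi Hni) => HTi _ _ Hs1i _.
case: (up_first Hi Hni) => Hup1 Hup1pos.
set q := (g1 i).1; set c1 := (g1 i).2.
have E1 : g1 i = (q, c1) by rewrite /q /c1 -surjective_pairing.
have Hsq : (ptarget (q, c1) (sigp (SS i))).1 = q by apply: (cyc_state (O := O)) => //; rewrite -Hs1i.
rewrite E1 in Hup1 Hup1pos.
have [Hpu1 Hpu2 Hpu3] := pump_up Htp Hup1 Hup1pos Hsq Heffp HA k.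
have HtakeP : is_path O (g1 i) (take p (W i)).
  by move: HWi; rewrite -{1}(cat_take_drop p (W i)) is_path_cat => /andP[].
have [Hsh1 Hsh2 Hsh3] := shift_path (k * (Aof (SS i))) (all_take_ p HTi) HtakeP.
case: (arc_split Hj Hnj) => _ HWj Hsuffj HWtj Hendj.
case: (Wfacts Hj Hnj) => HTj _ _ _ _.
have HdropP : is_path O c' (drop p' (W j)).
  by move: HWj; rewrite -{1}(cat_take_drop p' (W j)) is_path_cat => /andP[].
have HdropT : ptarget c' (drop p' (W j)) = g4 j.
  by rewrite /c' -ptarget_cat cat_take_drop.
have [Hsd1 Hsd2 Hsd3] := shift_path (m0.+1 * (Bof (TT j))) (all_drop_ p' HTj) HdropP.
case: (down_last Hj Hnj) => Hdl1 Hdl2 Hdl3.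
have [Hpd1 Hpd2 Hpd3] := pump_down Htm Hdl1 Hdl2 HB Hdl3 m0.
have Ejoin : shc (k * (Aof (SS i))) c = shc (m0.+1 * (Bof (TT j))) c'.
  by rewrite /shc Hst Hkm.
have Eg4 : shc (m0.+1 * (Bof (TT j))) (g4 j) = ((g4 j).1, (g4 j).2 + m0.+1 * (Bof (TT j)))%N by [].
have Eg4' : ((g4 j).1, (g4 j).2) = g4 j by rewrite -surjective_pairing.
have EkA : (q, c1 + k * (Aof (SS i)))%N = shc (k * (Aof (SS i))) (g1 i) by rewrite E1.
set X := npref (D i) ++ flatten (nseq k (sigp (SS i))) ++ take p (W i) ++ drop p' (W j)
          ++ flatten (nseq m0.+1 (sigm (TT j))) ++ nsuff (D j).
have HXp : is_path O (gs i) X.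
  rewrite /X; apply: pcat => //; rewrite -/(g1 i) E1.
  apply: pcat => //; rewrite Hpu3 EkA.
  apply: pcat => //; rewrite Hsh3 Ejoin.
  apply: pcat => //; rewrite Hsd3 HdropT Eg4.
  by apply: pcat => //; rewrite Hpd2 Eg4'.
have HXt : ptarget (gs i) X = gs j.+1.
  rewrite /X ptarget_cat -/(g1 i) E1 ptarget_cat Hpu3 EkA ptarget_cat Hsh3 Ejoin.
  rewrite ptarget_cat Hsd3 HdropT Eg4 ptarget_cat Hpd2 Eg4' Hendj.
  by rewrite gsS.
have HXz : (cnt0 (scanl (@step Q) (gs i) X) <= 1)%N.
  apply: cnt0_pbl; rewrite /X.
  apply: pbl_cat; first exact: pref_pos.
  rewrite -/(g1 i) E1; apply: pbl_cat => //; rewrite Hpu3 EkA.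
  apply: pbl_cat; first by rewrite Hsh2; apply: allpos_shift; rewrite muln_gt0 Hk HA.
  rewrite Hsh3 Ejoin; apply: pbl_cat; first by rewrite Hsd2; apply: allpos_shift; rewrite muln_gt0 HB.
  by rewrite Hsd3 HdropT Eg4.
set P := flatten (take i rhos); set R := flatten (drop j.+1 rhos).
have HPp : is_path O alpha P by move: Hpath; rewrite (flatten_split i) is_path_cat => /andP[].
have HRp : is_path O (gs j.+1) R by move: Hpath; rewrite (flatten_split j.+1) is_path_cat => /andP[].
have HRt : ptarget (gs j.+1) R = beta by rewrite -Htgt (flatten_split j.+1) ptarget_cat.
have Hnew := Hmin (ts := P ++ X ++ R).
have : is_path O alpha (P ++ X ++ R).
  by apply: pcat => //; rewrite -/(gs i); apply: pcat => //; rewrite HXt.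
move=> /Hnew; rewrite ptarget_cat -/(gs i) ptarget_cat HXt HRt => /(_ erefl).
have C1 : cnt0 (scanl (@step Q) alpha (P ++ X ++ R)) =
    (Fz i + cnt0 (scanl (@step Q) (gs i) X) + cnt0 (scanl (@step Q) (gs j.+1) R))%N.
  by rewrite cnt0_cat -/(gs i) cnt0_cat HXt addnA.
have C2 : cnt0 (scanl (@step Q) alpha (flatten rhos)) =
    (Fz j.+1 + cnt0 (scanl (@step Q) (gs j.+1) R))%N.
  by rewrite (flatten_split j.+1) cnt0_cat.
change ((cnt0 (confs alpha (flatten rhos)) <= cnt0 (confs alpha (P ++ X ++ R)))%N -> False).
rewrite !confs_cnt0 C1 C2.

have H1 := Fz_step Hj; have H2 := Fz_step Hi.
have E3 : (i.+1 + (j - i.+1) = j)%N by rewrite subnKC.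
have H3 := Fz_mono (u := i.+1) (d := j - i.+1).
rewrite E3 in H3; have {}H3 := H3 (ltnW Hj).
have Z1 := Zc_pos Hi Hni; have Z2 := Zc_pos Hj Hnj.
exact: (arith_end H1 H2 H3 HXz Z1 Z2).
Qed.


Lemma mod_dist (x y d : nat) : x = y %[mod d] -> (d %| absz (Posz y - Posz x)%R)%N.
Proof.
move=> H; case: (leqP x y) => Hxy.
- have -> : absz (Posz y - Posz x)%R = (y - x)%N by rewrite subzn.
  by rewrite -eqn_mod_dvd // H.
- have -> : absz (Posz y - Posz x)%R = (x - y)%N.
    by rewrite -opprB subzn ?abszN //; apply: ltnW.
  by rewrite -eqn_mod_dvd ?H //; apply: ltnW.
Qed.

Lemma capW i p : (p <= size (ncap (D i)))%N ->
  ptarget (g1 i) (take (size (nup (D i)) + p) (W i)) = ptarget (g2 i) (take p (ncap (D i))).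
Proof.
move=> Hp; rewrite /W takeD take_size_cat // drop_size_cat // ptarget_cat -/(g2 i).
rewrite take_cat; case: ltnP => H //.
have -> : p = size (ncap (D i)) by apply/eqP; rewrite eqn_leq Hp H.
by rewrite subnn take0 cats0 take_size.
Qed.

Lemma cap_inner i p p' M : (i < size rhos)%N -> isN i -> (p < p')%N -> (p' <= size (ncap (D i)))%N ->
  (gcdn (Aof (SS i)) (Bof (TT i)) %| M)%N ->
  (ptarget (g2 i) (take p (ncap (D i)))).1 = (ptarget (g2 i) (take p' (ncap (D i)))).1 ->
  (ptarget (g2 i) (take p (ncap (D i)))).2 = (ptarget (g2 i) (take p' (ncap (D i)))).2 %[mod M] ->
  False.
Proof.
move=> Hi Hn Hpp Hp' Hg.
set cap := ncap (D i).
set cp := ptarget (g2 i) (take p cap); set cp' := ptarget (g2 i) (take p' cap).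
move=> Hst Hmod.
case: (N_unpack Hi Hn) => _ _ _ _ [_ _ Hv _].
case: (Wfacts Hi Hn) => HT _ _ _ _.
case: (arc_split Hi Hn) => _ HW _ _ _.
have Hcap : is_path O (g2 i) cap.
  by move: HW; rewrite /W is_path_cat -/(g2 i) is_path_cat => /andP[_ /andP[]].
have HcapT : all (Tpos O) cap by move: HT; rewrite /W !all_cat => /and3P[].
set s := drop p (take p' cap).
have Etk : take p (take p' cap) = take p cap by rewrite take_takel // ltnW.
have Hp'path : is_path O (g2 i) (take p' cap).
  by move: Hcap; rewrite -{1}(cat_take_drop p' cap) is_path_cat => /andP[].
have Hs : is_path O cp s.
  by move: Hp'path; rewrite -{1}(cat_take_drop p (take p' cap)) is_path_cat Etk => /andP[].
have Hst' : ptarget cp s = cp'.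
  by rewrite /cp /cp' -Etk -ptarget_cat cat_take_drop.
have Hsz : size s = (p' - p)%N by rewrite /s size_drop size_takel.
have Hinf : infix s cap by apply: (infix_trans (infix_drop _ _) (infix_take _ _)).
have Hcyc : is_cycle O s.
  apply/and3P; split.
  - exact: all_drop_ (all_take_ _ HcapT).
  - exact: path_consistent Hs.
  - case Es : s Hs Hsz Hst' => [|t s'] Hs Hsz Hst'; first by move: Hsz => /=; lia.
    rewrite (path_head Hs) Hst -Hst' ptarget_state /= last_map //.
have := Hv s Hinf Hcyc; rewrite dvdzE /= => /negP; apply.
have -> : peff s = (Posz cp'.2 - Posz cp.2)%R.
  by rewrite -Hst' (ptarget_cnt Hs); rewrite addrC addKr.
apply: dvdn_trans Hg _; apply: mod_dist; exact: Hmod.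
Qed.


Definition NS (S : {set Q}) : {set 'I_(size rhos)} := [set i : 'I_(size rhos) | isN i && (SS i == S)].
Definition NT (T : {set Q}) : {set 'I_(size rhos)} := [set i : 'I_(size rhos) | isN i && (TT i == T)].
Definition NST (S T : {set Q}) : {set 'I_(size rhos)} :=
  [set i : 'I_(size rhos) | [&& isN i, SS i == S & TT i == T]].

Lemma inNS S (i : 'I_(size rhos)) : i \in NS S -> isN i /\ SS i = S.
Proof. by rewrite inE => /andP[-> /eqP]. Qed.
Lemma inNT T (i : 'I_(size rhos)) : i \in NT T -> isN i /\ TT i = T.
Proof. by rewrite inE => /andP[-> /eqP]. Qed.
Lemma inNST S T (i : 'I_(size rhos)) : i \in NST S T -> [/\ isN i, SS i = S & TT i = T].
Proof. by rewrite inE => /and3P[-> /eqP -> /eqP ->]. Qed.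

Lemma mod_gcd (x y a b : nat) : x %% a = y %% a -> x = y %[mod gcdn a b].
Proof. by move=> H; rewrite -(modn_dvdm x (dvdn_gcdl a b)) H modn_dvdm // dvdn_gcdl. Qed.

Lemma mod_gcd' (x y a b : nat) : x %% b = y %% b -> x = y %[mod gcdn a b].
Proof. by move=> H; rewrite -(modn_dvdm x (dvdn_gcdr a b)) H modn_dvdm // dvdn_gcdr. Qed.

Lemma Wsize_cap i p : (p <= size (ncap (D i)))%N -> (size (nup (D i)) + p <= size (W i))%N.
Proof. by rewrite /W !size_cat; lia. Qed.

Lemma capcount_up S : (\sum_(i in NS S) (size (ncap (D i))).+1 <= #|Q| * Aof S)%N.
Proof.
case: (set_0Vmem (NS S)) => [->|[i0 Hi0]]; first by rewrite big_set0.
have HA : (0 < Aof S)%N.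
  by case: (inNS Hi0) => Hn <-; case: (sigp_facts (ltn_ord i0) Hn).
pose cl (i : 'I_(size rhos)) (p : nat) := ptarget (g2 i) (take p (ncap (D i))).
have := inj_count (C := (Q * 'I_(Aof S))%type) (A := NS S)
  (f := fun i => size (ncap (D i))) (cls := fun i p => ((cl i p).1, Ordinal (ltn_pmod (cl i p).2 HA))).
rewrite card_prod card_ord; apply.
move=> i j p p' Hi Hj Hp Hp' [Hst Hmd].
case: (inNS Hi) => Hni HSi; case: (inNS Hj) => Hnj HSj.
have Hgen : forall (i j : 'I_(size rhos)) p p', i \in NS S -> j \in NS S ->
    (p <= size (ncap (D i)))%N -> (p' <= size (ncap (D j)))%N ->
    (cl i p).1 = (cl j p').1 -> (cl i p).2 %% Aof S = (cl j p').2 %% Aof S -> (i < j)%N -> False.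
  move=> i1 j1 q q' Hi1 Hj1 Hq Hq' Hs Hm Hlt.
  case: (inNS Hi1) => Hni1 HSi1; case: (inNS Hj1) => Hnj1 HSj1.
  apply: (merge (p := size (nup (D i1)) + q) (p' := size (nup (D j1)) + q') Hlt (ltn_ord j1) Hni1 Hnj1).
  - exact: Wsize_cap.
  - exact: Wsize_cap.
  - by rewrite !capW.
  - by rewrite !capW //; apply: mod_gcd; rewrite HSi1.
case: (ltngtP i j) => Hij.
- by exfalso; apply: (Hgen i j p p').
- by exfalso; apply: (Hgen j i p' p) => //; rewrite Hmd.
- have Eij : i = j by apply: val_inj.
  subst j; split => //.
  have Hgp : forall q q', (q < q')%N -> (q' <= size (ncap (D i)))%N ->
      (cl i q).1 = (cl i q').1 -> (cl i q).2 %% Aof S = (cl i q').2 %% Aof S -> False.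
    move=> q q' Hq Hq' Hs Hm.
    apply: (cap_inner (M := Aof S) (ltn_ord i) Hni Hq Hq').
    + by rewrite -HSi dvdn_gcdl.
    + exact: Hs.
    + exact: Hm.
  case: (ltngtP p p') => Hpp //.
  + by exfalso; apply: (Hgp p p').
  + by exfalso; apply: (Hgp p' p) => //; rewrite Hmd.
Qed.


Lemma capcount_down T : (\sum_(i in NT T) (size (ncap (D i))).+1 <= #|Q| * Bof T)%N.
Proof.
case: (set_0Vmem (NT T)) => [->|[i0 Hi0]]; first by rewrite big_set0.
have HB : (0 < Bof T)%N.
  by case: (inNT Hi0) => Hn <-; case: (sigm_facts (ltn_ord i0) Hn).
pose cl (i : 'I_(size rhos)) (p : nat) := ptarget (g2 i) (take p (ncap (D i))).
have := inj_count (C := (Q * 'I_(Bof T))%type) (A := NT T)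
  (f := fun i => size (ncap (D i))) (cls := fun i p => ((cl i p).1, Ordinal (ltn_pmod (cl i p).2 HB))).
rewrite card_prod card_ord; apply.
move=> i j p p' Hi Hj Hp Hp' [Hst Hmd].
case: (inNT Hi) => Hni HTi; case: (inNT Hj) => Hnj HTj.
have Hgen : forall (i j : 'I_(size rhos)) p p', i \in NT T -> j \in NT T ->
    (p <= size (ncap (D i)))%N -> (p' <= size (ncap (D j)))%N ->
    (cl i p).1 = (cl j p').1 -> (cl i p).2 %% Bof T = (cl j p').2 %% Bof T -> (i < j)%N -> False.
  move=> i1 j1 q q' Hi1 Hj1 Hq Hq' Hs Hm Hlt.
  case: (inNT Hi1) => Hni1 HTi1; case: (inNT Hj1) => Hnj1 HTj1.
  apply: (merge (p := size (nup (D i1)) + q) (p' := size (nup (D j1)) + q') Hlt (ltn_ord j1) Hni1 Hnj1).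
  - exact: Wsize_cap.
  - exact: Wsize_cap.
  - by rewrite !capW.
  - by rewrite !capW //; apply: mod_gcd'; rewrite HTj1.
case: (ltngtP i j) => Hij.
- by exfalso; apply: (Hgen i j p p').
- by exfalso; apply: (Hgen j i p' p) => //; rewrite Hmd.
- have Eij : i = j by apply: val_inj.
  subst j; split => //.
  have Hgp : forall q q', (q < q')%N -> (q' <= size (ncap (D i)))%N ->
      (cl i q).1 = (cl i q').1 -> (cl i q).2 %% Bof T = (cl i q').2 %% Bof T -> False.
    move=> q q' Hq Hq' Hs Hm.
    apply: (cap_inner (M := Bof T) (ltn_ord i) Hni Hq Hq').
    + by rewrite -HTi dvdn_gcdr.
    + exact: Hs.
    + exact: Hm.
  case: (ltngtP p p') => Hpp //.
  + by exfalso; apply: (Hgp p p').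
  + by exfalso; apply: (Hgp p' p) => //; rewrite Hmd.
Qed.

Lemma NST_card S T : (#|NST S T| <= gcdn (Aof S) (Bof T))%N.
Proof.
case: (set_0Vmem (NST S T)) => [->|[i0 Hi0]]; first by rewrite cards0.
have Hg : (0 < gcdn (Aof S) (Bof T))%N.
  case: (inNST Hi0) => Hn <- _; case: (sigp_facts (ltn_ord i0) Hn) => _ _ HA _ _.
  by rewrite gcdn_gt0 HA.
have := inj_count (C := 'I_(gcdn (Aof S) (Bof T))) (A := NST S T)
  (f := fun _ => 0%N) (cls := fun i _ => Ordinal (ltn_pmod (g1 i).2 Hg)).
rewrite card_ord sum1_card; apply.
move=> i j p p' Hi Hj Hp Hp' [Hmd].
have Ep : p = 0%N by lia. have Ep' : p' = 0%N by lia.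
subst p p'.
have Hgen : forall (i j : 'I_(size rhos)), i \in NST S T -> j \in NST S T ->
    (g1 i).2 %% gcdn (Aof S) (Bof T) = (g1 j).2 %% gcdn (Aof S) (Bof T) -> (i < j)%N -> False.
  move=> i1 j1 Hi1 Hj1 Hm Hlt.
  case: (inNST Hi1) => Hni1 HSi1 HTi1; case: (inNST Hj1) => Hnj1 HSj1 HTj1.
  apply: (merge (p := 0) (p' := 0) Hlt (ltn_ord j1) Hni1 Hnj1) => //=.
  - case: (Wfacts (ltn_ord i1) Hni1) => _ _ _ H1 _; case: (Wfacts (ltn_ord j1) Hnj1) => _ _ _ H2 _.
    rewrite HSi1 in H1; rewrite HSj1 -H1 in H2.
    by rewrite !take0; case: H2 => E; exact: (esym E).
  - by rewrite !take0 HSi1 HTj1; exact: Hm.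
case: (ltngtP i j) => Hij.
- by exfalso; apply: (Hgen i j).
- by exfalso; apply: (Hgen j i) => //; rewrite Hmd.
- by split => //; apply: val_inj.
Qed.


Lemma Bof_le i : (i < size rhos)%N -> isN i -> (Bof (TT i) <= #|TT i|)%N.
Proof.
move=> Hi Hn; case: (sigm_facts Hi Hn) => _ _ _ Hsz Ht.
exact: leq_trans (peff_le Ht) Hsz.
Qed.

Lemma Aof_le i : (i < size rhos)%N -> isN i -> (Aof (SS i) <= #|SS i|)%N.
Proof.
move=> Hi Hn; case: (sigp_facts Hi Hn) => _ _ _ Hsz Ht.
exact: leq_trans (peff_le Ht) Hsz.
Qed.

Lemma lcm_sum_up S : (\sum_(i in NS S) lcmn (Aof S) (Bof (TT i)) <= Aof S * #|Q|)%N.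
Proof.
rewrite (partition_big_imset (fun i : 'I_(size rhos) => TT i)) /=.
apply: (@leq_trans (\sum_(T in [set TT (nat_of_ord i) | i in NS S]) Aof S * #|T|)).
- apply: leq_sum => T /imsetP [i0 Hi0 ->].
  case: (inNS Hi0) => Hn0 HS0.
  rewrite (eq_bigr (fun _ => lcmn (Aof S) (Bof (TT i0)))); last by move=> i /andP[_ /eqP ->].
  rewrite (eq_bigl (fun i => i \in NST S (TT i0))); last by move=> i; rewrite !inE andbA.
  rewrite sum_nat_const.
  apply: (@leq_trans (gcdn (Aof S) (Bof (TT i0)) * lcmn (Aof S) (Bof (TT i0)))).
    by rewrite leq_mul2r NST_card orbT.
  rewrite mulnC muln_lcm_gcd leq_mul2l; apply/orP; right.
  exact: Bof_le (ltn_ord i0) Hn0.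
- rewrite -big_distrr /= leq_mul2l; apply/orP; right.
  apply: (SCC_sum (O := O)) => T /imsetP [i0 Hi0 ->].
  case: (inNS Hi0) => Hn0 _.
  by case: (N_unpack (ltn_ord i0) Hn0) => [[[_ HT] _] _ _ _ _].
Qed.

Lemma lcm_sum_down T : (\sum_(i in NT T) lcmn (Aof (SS i)) (Bof T) <= Bof T * #|Q|)%N.
Proof.
rewrite (partition_big_imset (fun i : 'I_(size rhos) => SS i)) /=.
apply: (@leq_trans (\sum_(S in [set SS (nat_of_ord i) | i in NT T]) Bof T * #|S|)).
- apply: leq_sum => S /imsetP [i0 Hi0 ->].
  case: (inNT Hi0) => Hn0 HT0.
  rewrite (eq_bigr (fun _ => lcmn (Aof (SS i0)) (Bof T))); last by move=> i /andP[_ /eqP ->].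
  rewrite (eq_bigl (fun i => i \in NST (SS i0) T)).
  2: by move=> i; rewrite !inE; case: (isN i); case: (TT i == T); case: (SS i == SS i0).
  rewrite sum_nat_const.
  apply: (@leq_trans (gcdn (Aof (SS i0)) (Bof T) * lcmn (Aof (SS i0)) (Bof T))).
    by rewrite leq_mul2r NST_card orbT.
  rewrite mulnC muln_lcm_gcd mulnC leq_mul2l; apply/orP; right.
  exact: Aof_le (ltn_ord i0) Hn0.
- rewrite -big_distrr /= leq_mul2l; apply/orP; right.
  apply: (SCC_sum (O := O)) => S /imsetP [i0 Hi0 ->].
  case: (inNT Hi0) => Hn0 _.
  by case: (N_unpack (ltn_ord i0) Hn0) => [[[HS _] _] _ _ _ _].
Qed.

Lemma arith4 (a c l n : nat) : (c <= n * a)%N -> (l <= a * n)%N -> (2 * c + 2 * l <= 4 * n * a)%N.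
Proof. nia. Qed.

Lemma up_bound S : (\sum_(i in NS S) na (D i) <= 4 * #|Q|)%N.
Proof.
case: (set_0Vmem (NS S)) => [->|[i0 Hi0]]; first by rewrite big_set0.
have HA : (0 < Aof S)%N.
  by case: (inNS Hi0) => Hn <-; case: (sigp_facts (ltn_ord i0) Hn).
rewrite -(leq_pmul2r HA) big_distrl /=.
apply: (@leq_trans (\sum_(i in NS S) (2 * size (ncap (D i)) + 2 * lcmn (Aof S) (Bof (TT i))))).
  apply: leq_sum => i Hi; case: (inNS Hi) => Hn HS.
  by case: (N_unpack (ltn_ord i) Hn) => _ _ _ _ [H _ _ _]; rewrite -HS.
rewrite big_split /= -!big_distrr /=.
apply: arith4; last exact: lcm_sum_up.
apply: leq_trans (capcount_up S); apply: leq_sum => i _; exact: leqnSn.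
Qed.

Lemma down_bound T : (\sum_(i in NT T) nb (D i) <= 4 * #|Q|)%N.
Proof.
case: (set_0Vmem (NT T)) => [->|[i0 Hi0]]; first by rewrite big_set0.
have HB : (0 < Bof T)%N.
  by case: (inNT Hi0) => Hn <-; case: (sigm_facts (ltn_ord i0) Hn).
rewrite -(leq_pmul2r HB) big_distrl /=.
apply: (@leq_trans (\sum_(i in NT T) (2 * size (ncap (D i)) + 2 * lcmn (Aof (SS i)) (Bof T)))).
  apply: leq_sum => i Hi; case: (inNT Hi) => Hn HT.
  by case: (N_unpack (ltn_ord i) Hn) => _ _ _ _ [_ H _ _]; rewrite -HT.
rewrite big_split /= -!big_distrr /=.
apply: arith4; last exact: lcm_sum_down.
apply: leq_trans (capcount_down T); apply: leq_sum => i _; exact: leqnSn.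
Qed.


Lemma final_up : (\sum_(i < size rhos | isN i) size (nup (D i)) <= 4 * #|Q| ^ 2)%N.
Proof.
rewrite (eq_bigl (fun i => i \in [set i : 'I_(size rhos) | isN i])); last by move=> i; rewrite inE.
rewrite (partition_big_imset (fun i : 'I_(size rhos) => SS i)) /=.
apply: (@leq_trans (\sum_(S in [set SS (nat_of_ord i) | i in [set i : 'I_(size rhos) | isN i]])
   4 * #|Q| * #|S|)).
- apply: leq_sum => S /imsetP [i0 Hi0 ->].
  rewrite inE in Hi0.
  rewrite (eq_bigl (fun i => i \in NS (SS i0))); last by move=> i; rewrite !inE.
  rewrite (eq_bigr (fun i : 'I_(size rhos) => na (D i) * size (sigp (SS i0))))%N; last first.
    move=> i /inNS [Hn HS]; case: (N_unpack (ltn_ord i) Hn) => _ _ [Hup _] _ _.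
    by rewrite Hup size_flatten_nseq HS.
  rewrite -big_distrl /=; apply: leq_mul (up_bound _) _.
  by case: (sigp_facts (ltn_ord i0) Hi0).
- rewrite -big_distrr /= expnS expn1 mulnA leq_mul2l; apply/orP; right.
  apply: (SCC_sum (O := O)) => S /imsetP [i0 Hi0 ->].
  rewrite inE in Hi0.
  by case: (N_unpack (ltn_ord i0) Hi0) => [[[HS _] _] _ _ _ _].
Qed.

Lemma final_down : (\sum_(i < size rhos | isN i) size (ndown (D i)) <= 4 * #|Q| ^ 2)%N.
Proof.
rewrite (eq_bigl (fun i => i \in [set i : 'I_(size rhos) | isN i])); last by move=> i; rewrite inE.
rewrite (partition_big_imset (fun i : 'I_(size rhos) => TT i)) /=.
apply: (@leq_trans (\sum_(T in [set TT (nat_of_ord i) | i in [set i : 'I_(size rhos) | isN i]])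
   4 * #|Q| * #|T|)).
- apply: leq_sum => T /imsetP [i0 Hi0 ->].
  rewrite inE in Hi0.
  rewrite (eq_bigl (fun i => i \in NT (TT i0))); last by move=> i; rewrite !inE.
  rewrite (eq_bigr (fun i : 'I_(size rhos) => nb (D i) * size (sigm (TT i0))))%N; last first.
    move=> i /inNT [Hn HT]; case: (N_unpack (ltn_ord i) Hn) => _ _ [_ Hdn] _ _.
    by rewrite Hdn size_flatten_nseq HT.
  rewrite -big_distrl /=; apply: leq_mul (down_bound _) _.
  by case: (sigm_facts (ltn_ord i0) Hi0).
- rewrite -big_distrr /= expnS expn1 mulnA leq_mul2l; apply/orP; right.
  apply: (SCC_sum (O := O)) => T /imsetP [i0 Hi0 ->].
  rewrite inE in Hi0.
  by case: (N_unpack (ltn_ord i0) Hi0) => [[[_ HT] _] _ _ _ _].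
Qed.

End Main.

Theorem lemma7 (Q : finType) (O : OCS Q) (sigp sigm : {set Q} -> seq (trans Q))
  (alpha beta : conf Q) (rhos : seq (seq (trans Q))) (isN : pred nat)
  (SS TT : nat -> {set Q}) (D : nat -> ndec Q) :
  fixed_cycles O sigp sigm ->
  alpha.2 = 0%N -> beta.2 = 0%N ->
  is_path O alpha (flatten rhos) -> ptarget alpha (flatten rhos) = beta ->
  (forall ts, is_path O alpha ts -> ptarget alpha ts = beta ->
     (count (fun c : conf Q => c.2 == 0%N) (confs alpha (flatten rhos))
      <= count (fun c : conf Q => c.2 == 0%N) (confs alpha ts))%N) ->
  (forall i, (i < size rhos)%N ->
     is_arc O (ptarget alpha (flatten (take i rhos))) (nth [::] rhos i)) ->
  (forall i, (i < size rhos)%N -> ~~ isN i ->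
     let g := ptarget alpha (flatten (take i rhos)) in
     is_low g (nth [::] rhos i) /\
     forall ts, is_arc O g ts -> is_low g ts ->
       ptarget g ts = ptarget g (nth [::] rhos i) ->
       (size (nth [::] rhos i) <= size ts)%N) ->
  (forall i, (i < size rhos)%N -> isN i ->
     let g := ptarget alpha (flatten (take i rhos)) in
     normal_dec O sigp sigm (SS i) (TT i) g (nth [::] rhos i) (D i) /\
     good_dec O sigp sigm (SS i) (TT i) g (D i)) ->
  (\sum_(i < size rhos | isN i) size (nup (D i)) <= 4 * #|Q| ^ 2)%N /\
  (\sum_(i < size rhos | isN i) size (ndown (D i)) <= 4 * #|Q| ^ 2)%N.
Proof.
move=> Hfix Ha0 Hb0 Hpath Htgt Hmin Harc HL HN.
split.
- exact: (final_up Hfix Ha0 Hpath Htgt Hmin Harc HN).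
- exact: (final_down Hfix Ha0 Hpath Htgt Hmin Harc HN).
Qed.
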